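(* Let $\mathcal{P}^{\uparrow}_+$ be the proper orthochronous Poincaré group on $\mathbb{R}^4$, i.e. the group of maps $x\mapsto Lx+b$ with $b\in\mathbb{R}^4$ and $L$ in the proper orthochronous Lorentz group of the form $g=\mathrm{diag}(1,1,1,-c^2)$. Then every $\mathcal{P}^{\uparrow}_+$-invariant equivalence relation on $\mathbb{R}^4$ is trivial, i.e. it is either the total relation $\mathbb{R}^4\times\mathbb{R}^4$ or the identity relation.
   Context: An equivalence relation $\sim$ is $\mathcal{P}^{\uparrow}_+$-invariant if $x\sim y$ implies $h(x)\sim h(y)$ for all $x,y\in\mathbb{R}^4$ and all $h\in\mathcal{P}^{\uparrow}_+$. *)

(* Defs.v *)
From mathcomp Require Import all_boot all_order all_algebra.
From mathcomp Require Import reals.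
Set Implicit Arguments. Unset Strict Implicit. Unset Printing Implicit Defensive.
Import Order.TTheory GRing.Theory Num.Theory.
Local Open Scope ring_scope.

(* Coordinates of R^4 are indexed by 'I_4 = {0,1,2,3}; index 3 is time. *)
Definition time_idx : 'I_4 := ord_max.

Definition minkowski_metric (R : realType) (c : R) : 'M[R]_4 :=
  \matrix_(i, j) (if i == j then (if i == time_idx then - c ^+ 2 else 1) else 0).

Definition proper_orthochronous_lorentz (R : realType) (c : R) (L : 'M[R]_4) : Prop :=
  L^T *m minkowski_metric c *m L = minkowski_metric c /\
  \det L = 1 /\
  0 < L time_idx time_idx.

Definition poincare_act (R : realType) (L : 'M[R]_4) (b x : 'cV[R]_4) : 'cV[R]_4 :=
  L *m x + b.

Definition equiv_relation_on (T : Type) (r : T -> T -> Prop) : Prop :=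
  (forall x, r x x) /\ (forall x y, r x y -> r y x) /\
  (forall x y z, r x y -> r y z -> r x z).

Definition poincare_invariant (R : realType) (c : R) (r : 'cV[R]_4 -> 'cV[R]_4 -> Prop) : Prop :=
  forall (L : 'M[R]_4) (b : 'cV[R]_4), proper_orthochronous_lorentz c L ->
    forall x y, r x y -> r (poincare_act L b x) (poincare_act L b y).

(* Main.v *)
Require Import Defs.
From mathcomp Require Import all_boot all_order all_algebra.
From mathcomp Require Import reals.
From mathcomp Require Import ring lra.
From Stdlib Require Import Classical.
Set Implicit Arguments. Unset Strict Implicit. Unset Printing Implicit Defensive.
Import Order.TTheory GRing.Theory Num.Theory.
Local Open Scope ring_scope.

Section Aux.
Variable R : realType.
Implicit Types (f g : nat -> nat -> R) (u w : nat -> R).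
Definition mxn f : 'M[R]_4 := \matrix_(i,j) f i j.
Definition vecn u : 'cV[R]_4 := \col_i u i.

Ltac ord4 i := case: i => [[|[|[|[|?]]]] ?] //=.

Lemma mxn_eq f g : (forall i j, (i < 4)%N -> (j < 4)%N -> f i j = g i j) -> mxn f = mxn g.
Proof. by move=> h; apply/matrixP => i j; rewrite !mxE h. Qed.
Lemma vecn_eq u w : (forall i, (i < 4)%N -> u i = w i) -> vecn u = vecn w.
Proof. by move=> h; apply/matrixP => i j; rewrite !mxE h. Qed.
Lemma trmxn f : (mxn f)^T = mxn (fun i j => f j i).
Proof. by apply/matrixP => i j; rewrite !mxE. Qed.
Lemma mulmxn f g : mxn f *m mxn g =
  mxn (fun i j => f i 0%N * g 0%N j + f i 1%N * g 1%N j + f i 2%N * g 2%N j + f i 3%N * g 3%N j).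
Proof.
apply/matrixP => i j; rewrite !mxE !big_ord_recr big_ord0 /= add0r !mxE; done.
Qed.
Lemma mulmxvn f u : mxn f *m vecn u =
  vecn (fun i => f i 0%N * u 0%N + f i 1%N * u 1%N + f i 2%N * u 2%N + f i 3%N * u 3%N).
Proof.
apply/matrixP => i j; rewrite !mxE !big_ord_recr big_ord0 /= add0r !mxE; done.
Qed.
Lemma addvn u w : vecn u + vecn w = vecn (fun i => u i + w i).
Proof. by apply/matrixP => i j; rewrite !mxE. Qed.
Lemma oppvn u : - vecn u = vecn (fun i => - u i).
Proof. by apply/matrixP => i j; rewrite !mxE. Qed.
Lemma vecnE (v : 'cV[R]_4) : v = vecn (fun i => v (inord i) 0).
Proof.
apply/matrixP => i j; rewrite !mxE ord1; congr (v _ _); apply/val_inj; rewrite /= inordK //.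
Qed.
Definition gf (c : R) (i j : nat) : R := if i == j then (if i == 3%N then - c ^+ 2 else 1) else 0.
Lemma minkE c : minkowski_metric c = mxn (gf c).
Proof. apply/matrixP => i j; rewrite !mxE /gf. by ord4 i; ord4 j. Qed.

Lemma tt1 : (3 : 'I_4) = time_idx. Proof. by apply/val_inj. Qed.

Lemma det4 (f : nat -> nat -> R) : \det (mxn f) = f 0%N 0%N * f 1%N 1%N * f 2%N 2%N * f 3%N 3%N - f 0%N 0%N * f 1%N 1%N * f 2%N 3%N * f 3%N 2%N - f 0%N 0%N * f 1%N 2%N * f 2%N 1%N * f 3%N 3%N + f 0%N 0%N * f 1%N 2%N * f 2%N 3%N * f 3%N 1%N + f 0%N 0%N * f 1%N 3%N * f 2%N 1%N * f 3%N 2%N - f 0%N 0%N * f 1%N 3%N * f 2%N 2%N * f 3%N 1%N - f 0%N 1%N * f 1%N 0%N * f 2%N 2%N * f 3%N 3%N + f 0%N 1%N * f 1%N 0%N * f 2%N 3%N * f 3%N 2%N + f 0%N 1%N * f 1%N 2%N * f 2%N 0%N * f 3%N 3%N - f 0%N 1%N * f 1%N 2%N * f 2%N 3%N * f 3%N 0%N - f 0%N 1%N * f 1%N 3%N * f 2%N 0%N * f 3%N 2%N + f 0%N 1%N * f 1%N 3%N * f 2%N 2%N * f 3%N 0%N + f 0%N 2%N * f 1%N 0%N * f 2%N 1%N * f 3%N 3%N - f 0%N 2%N * f 1%N 0%N * f 2%N 3%N * f 3%N 1%N - f 0%N 2%N * f 1%N 1%N * f 2%N 0%N * f 3%N 3%N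 + f 0%N 2%N * f 1%N 1%N * f 2%N 3%N * f 3%N 0%N + f 0%N 2%N * f 1%N 3%N * f 2%N 0%N * f 3%N 1%N - f 0%N 2%N * f 1%N 3%N * f 2%N 1%N * f 3%N 0%N - f 0%N 3%N * f 1%N 0%N * f 2%N 1%N * f 3%N 2%N + f 0%N 3%N * f 1%N 0%N * f 2%N 2%N * f 3%N 1%N + f 0%N 3%N * f 1%N 1%N * f 2%N 0%N * f 3%N 2%N - f 0%N 3%N * f 1%N 1%N * f 2%N 2%N * f 3%N 0%N - f 0%N 3%N * f 1%N 2%N * f 2%N 0%N * f 3%N 1%N + f 0%N 3%N * f 1%N 2%N * f 2%N 1%N * f 3%N 0%N.
Proof.
  rewrite /mxn.
  rewrite !(expand_det_row _ 0) /cofactor !big_ord_recr !big_ord0 /=;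
  rewrite !(expand_det_row _ 0) /cofactor !big_ord_recr !big_ord0 /=;
  rewrite !(expand_det_row _ 0) /cofactor !big_ord_recr !big_ord0 /=;
  rewrite !det_mx11 !mxE /=.
  ring.
Qed.

Definition bst (a : nat) (c k : R) (p q : nat) : R :=
  if p == q then (if (p == a) || (p == 3)%N then (k + k^-1)/2 else 1)
  else if (p == a) && (q == 3)%N then c * (k - k^-1)/2
  else if (p == 3)%N && (q == a) then (k - k^-1)/(2 * c) else 0.

Lemma bst_lorentz a c k : (a < 3)%N -> 0 < c -> 0 < k ->
  proper_orthochronous_lorentz c (mxn (bst a c k)).
Proof.
move=> ha hc hk; have c0 : c != 0 by rewrite gt_eqF.
have k0 : k != 0 by rewrite gt_eqF.
split; [|split].
- rewrite minkE trmxn !mulmxn; apply: mxn_eq => i j hi hj.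
  case: a ha => [|[|[|a]]] // _; case: i hi => [|[|[|[|i]]]] // _;
  case: j hj => [|[|[|[|j]]]] // _; rewrite /bst /gf /= ?(mul0r,mulr0,addr0,add0r,mulr1,mul1r).
  all: try (field; rewrite ?c0 ?k0 //=).
- rewrite det4; case: a ha => [|[|[|a]]] // _; rewrite /bst /=; field; by rewrite ?c0 ?k0.
- rewrite -tt1 mxE /bst /=. case: a ha => [|[|[|a]]] // _ /=;
  apply: divr_gt0 => //; apply: addr_gt0 => //; rewrite invr_gt0 //.
Qed.

Definition dgf (s0 s1 s2 : R) (i j : nat) : R :=
  if i == j then (if i == 0%N then s0 else if i == 1%N then s1 else if i == 2%N then s2 else 1) else 0.

Ltac dg_tac :=
  split; [|split];
  [ rewrite minkE trmxn !mulmxn; apply: mxn_eq => -[|[|[|[|?]]]] -[|[|[|[|?]]]] // _ _;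
    rewrite /dgf /gf /=; ring
  | rewrite det4 /dgf /=; ring
  | by rewrite -tt1 mxE /dgf /= ltr01 ].

Lemma P01_l c : proper_orthochronous_lorentz c (mxn (dgf (-1) (-1) 1)). Proof. dg_tac. Qed.
Lemma P02_l c : proper_orthochronous_lorentz c (mxn (dgf (-1) 1 (-1))). Proof. dg_tac. Qed.
Lemma P12_l c : proper_orthochronous_lorentz c (mxn (dgf 1 (-1) (-1))). Proof. dg_tac. Qed.

Definition ej (j : nat) (a : R) : 'cV[R]_4 := vecn (fun i => if i == j then a else 0).

Lemma exk (mu : R) : exists2 k : R, 0 < k & k^-1 = k - mu.
Proof.
set s := Num.sqrt (mu ^+ 2 + 4).
have s0 : 0 <= s := sqrtr_ge0 _.
have s2 : s ^+ 2 = mu ^+ 2 + 4 by rewrite sqr_sqrtr // addr_ge0 // sqr_ge0.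
have kp : 0 < (mu + s) / 2 by apply: divr_gt0 => //; nra.
exists ((mu + s) / 2) => //.
have k0 : (mu + s) / 2 != 0 by rewrite gt_eqF.
apply: (mulfI k0); rewrite mulfV //.
have -> : (mu + s) / 2 * ((mu + s) / 2 - mu) = (s ^+ 2 - mu ^+ 2) / 4 by field.
by rewrite s2; field.
Qed.
End Aux.

Theorem corollary3p9 (R : realType) (c : R) (hc : 0 < c)
  (r : 'cV[R]_4 -> 'cV[R]_4 -> Prop) :
  equiv_relation_on r -> poincare_invariant c r ->
  (forall x y, r x y) \/ (forall x y, r x y <-> x = y).
Proof.
move=> [rr [rs rt]] hinv.
have c0 : c != 0 by rewrite gt_eqF.
have L1 : proper_orthochronous_lorentz c 1.
  split; first by rewrite trmx1 mulmx1 mul1mx.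
  by split; [exact: det1 | rewrite mxE eqxx ltr01].
have tr : forall x y b, r x y -> r (x + b) (y + b).
  by move=> x y b h; have := hinv 1 b L1 x y h; rewrite /poincare_act !mul1mx.
have Lw : forall L w, proper_orthochronous_lorentz c L -> r 0 w -> r 0 (L *m w).
  by move=> L w hL h; have := hinv L 0 hL 0 w h; rewrite /poincare_act mulmx0 !addr0.
have Sadd : forall u w, r 0 u -> r 0 w -> r 0 (u + w).
  move=> u w hu hw; apply: rt hu _; have := tr 0 w u hw; by rewrite add0r addrC.
have Sopp : forall u, r 0 u -> r 0 (- u).
  move=> u hu; apply: rs; have := tr 0 u (-u) hu; by rewrite add0r addrN.
have Seq : forall u w, r 0 u -> u = w -> r 0 w by move=> u w h <-.
have sp : forall j a, (j < 3)%N -> a != 0 -> r 0 (ej j a) -> forall l, r 0 (ej 3 l).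
  move=> j a hj a0 ha l.
  have [k kp ki] := exk (l * c / a).
  have kip : 0 < k^-1 by rewrite invr_gt0.
  apply: (Seq _ _ (Sadd _ _ (Lw _ _ (bst_lorentz hj hc kp) ha)
                     (Sopp _ (Lw _ _ (bst_lorentz hj hc kip) ha)))).
  rewrite /ej !mulmxvn oppvn addvn; apply: vecn_eq => i hi.
  rewrite /bst invrK ki; clear ha.
  case: j hj => [|[|[|j]]] // _; case: i hi => [|[|[|[|i]]]] // _ /=; field;
    by rewrite ?c0 ?a0.
have tm : forall a, a != 0 -> r 0 (ej 3 a) -> r 0 (ej 0 (a * (c * (3 / 2)))).
  move=> a a0 ha.
  have hL := bst_lorentz (a := 0) (k := 2) isT hc (ltr0Sn R 1).
  apply: (Seq _ _ (Sadd _ _ (Lw _ _ hL ha) (Sopp _ (Lw _ _ (P01_l c) (Lw _ _ hL ha))))).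
  rewrite /ej !mulmxvn oppvn addvn; apply: vecn_eq => i hi.
  rewrite /bst /dgf.
  case: i hi => [|[|[|[|i]]]] // _ /=; field; rewrite ?c0 //=.
have spa : (forall l, r 0 (ej 3 l)) -> forall j mu, (j < 3)%N -> r 0 (ej j mu).
  move=> T j mu hj.
  have hL := bst_lorentz (a := j) (k := 2) hj hc (ltr0Sn R 1).
  set B := c * (2 - 2^-1) / 2.
  set D : R := (2 + 2^-1) / 2.
  apply: (Seq _ _ (Sadd _ _ (Lw _ _ hL (T (mu / B))) (Sopp _ (T (mu / B * D))))).
  rewrite /ej !mulmxvn oppvn addvn; apply: vecn_eq => i hi.
  rewrite /bst /B /D; clear hL.
  case: j hj => [|[|[|j]]] // _; case: i hi => [|[|[|[|i]]]] // _ /=; field;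
    by rewrite ?c0.
have Sall : forall v, r 0 v -> v != 0 -> forall w, r 0 w.
  move=> v Sv v0 w.
  have [g vE] : exists g, v = vecn g by exists (fun i => v (inord i) 0); exact: vecnE.
  have h0 : r 0 (ej 0 (4 * g 0%N)).
    have hu := Sadd _ _ Sv (Lw _ _ (P12_l c) Sv).
    apply: (Seq _ _ (Sadd _ _ hu (Sopp _ (Lw _ _ (P01_l c) hu)))).
    rewrite vE /ej !mulmxvn !addvn !mulmxvn !oppvn !addvn; apply: vecn_eq => i hi.
    rewrite /dgf; case: i hi => [|[|[|[|i]]]] // _ /=; ring.
  have h1 : r 0 (ej 1 (4 * g 1%N)).
    have hu := Sadd _ _ Sv (Lw _ _ (P02_l c) Sv).
    apply: (Seq _ _ (Sadd _ _ hu (Sopp _ (Lw _ _ (P01_l c) hu)))).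
    rewrite vE /ej !mulmxvn !addvn !mulmxvn !oppvn !addvn; apply: vecn_eq => i hi.
    rewrite /dgf; case: i hi => [|[|[|[|i]]]] // _ /=; ring.
  have h2 : r 0 (ej 2 (4 * g 2%N)).
    have hu := Sadd _ _ Sv (Lw _ _ (P01_l c) Sv).
    apply: (Seq _ _ (Sadd _ _ hu (Sopp _ (Lw _ _ (P02_l c) hu)))).
    rewrite vE /ej !mulmxvn !addvn !mulmxvn !oppvn !addvn; apply: vecn_eq => i hi.
    rewrite /dgf; case: i hi => [|[|[|[|i]]]] // _ /=; ring.
  have h3 : r 0 (ej 3 (4 * g 3%N)).
    have hu := Sadd _ _ Sv (Lw _ _ (P12_l c) Sv).
    apply: (Seq _ _ (Sadd _ _ hu (Lw _ _ (P01_l c) hu))).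
    rewrite vE /ej !mulmxvn !addvn !mulmxvn !addvn; apply: vecn_eq => i hi.
    rewrite /dgf; case: i hi => [|[|[|[|i]]]] // _ /=; ring.
  have T : forall l, r 0 (ej 3 l).
    have : exists2 j, (j < 4)%N & g j != 0.
      apply: NNPP => hn; move/negP: v0; apply; rewrite vE; apply/eqP/matrixP => i k.
      rewrite !mxE; case: (boolP (g i == 0)) => [/eqP //|gi]; case: hn; by exists i.
    have f4 : (4 : R) != 0 by rewrite pnatr_eq0.
    case=> -[|[|[|[|j]]]] // _ gj.
    - exact: (sp 0%N _ isT (mulf_neq0 f4 gj) h0).
    - exact: (sp 1%N _ isT (mulf_neq0 f4 gj) h1).
    - exact: (sp 2%N _ isT (mulf_neq0 f4 gj) h2).
    - apply: (sp 0%N _ isT _ (tm _ (mulf_neq0 f4 gj) h3)).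
      apply: mulf_neq0; first exact: mulf_neq0 f4 gj.
      rewrite gt_eqF //; lra.
  have [gw ->] : exists g, w = vecn g by exists (fun i => w (inord i) 0); exact: vecnE.
  apply: (Seq _ _ (Sadd _ _ (Sadd _ _ (Sadd _ _ (spa T 0%N (gw 0%N) isT) (spa T 1%N (gw 1%N) isT))
      (spa T 2%N (gw 2%N) isT)) (T (gw 3%N)))).
  rewrite /ej !addvn; apply: vecn_eq => i hi.
  case: i hi => [|[|[|[|i]]]] // _ /=; ring.
case: (classic (forall x y, r x y <-> x = y)) => [h|h]; [by right|left].
have [x [y [hxy nxy]]] : exists x y, r x y /\ x <> y.
  apply: NNPP => hn; apply: h => x y; split => [hxy|->//].
  apply: NNPP => nxy; apply: hn; by exists x, y.
have Sv : r 0 (y - x) by have := tr x y (-x) hxy; rewrite addrN.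
have yx0 : y - x != 0 by rewrite subr_eq0; apply/eqP => e; apply: nxy; rewrite e.
move=> x' y'; have := tr 0 (y' - x') x' (Sall _ Sv yx0 _); by rewrite add0r subrK.
Qed.
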